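(* Let $G_1$ be a graph on $n$ nodes with Laplacian $Q_1$, and let $G_1^c$ be its complement, whose Laplacian is $nI-J-Q_1$ ($J$ the $n\times n$ all-one matrix). For $p\ge0$ let $$Q(p)=\begin{bmatrix} Q_1+npI & -pJ\\ -pJ & nI-J-Q_1+npI\end{bmatrix}$$ (the graph $G_1$ coupled to $G_1^c$ by an $n$-to-$n$ interconnection of weight $p$), with eigenvalues $0=\mu_N(p)\le\mu_{N-1}(p)\le\dots\le\mu_1(p)$, $N=2n$. Define $p^*=\sup\big(\{0\}\cup\{p>0:\ \mu_{N-1}(p)=2np\}\big)$. Then $$p^*=\min\left(\frac{\mu_{n-1}(Q_1)}{n},\ 1-\frac{\mu_1(Q_1)}{n}\right),$$ where $\mu_{n-1}(Q_1)$ and $\mu_1(Q_1)$ are the second smallest and the largest eigenvalue of $Q_1$, respectively.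
   Context: $2np$ is an eigenvalue of $Q(p)$ with eigenvector $[u^T,-u^T]^T$, $u$ the all-one vector; $p^*$ is the structural transition threshold, described in the paper as the coupling beyond which the algebraic connectivity $\mu_{N-1}$ no longer equals $2np$ (formalized here as the supremum). *)

(* Defs.v *)
From HB Require Import structures.
From mathcomp Require Import all_boot all_order all_algebra.
From mathcomp Require Import classical_sets reals.
From Stdlib Require Import ClassicalEpsilon.
Set Implicit Arguments. Unset Strict Implicit. Unset Printing Implicit Defensive.
Import Order.TTheory GRing.Theory Num.Theory.
Local Open Scope ring_scope.

Definition simple_graph (n : nat) (e : rel 'I_n) : Prop :=
  symmetric e /\ irreflexive e.

Definition laplacian (R : realType) (n : nat) (e : rel 'I_n) : 'M[R]_n :=
  \matrix_(i, j) (if i == j then (#|[set k | e i k]|)%:R else - ((e i j : nat)%:R)).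

Definition is_spectrum (R : realType) (m : nat) (A : 'M[R]_m) (s : seq R) : Prop :=
  [/\ size s = m, sorted (fun x y => y <= x) s
    & char_poly A = \prod_(x <- s) ('X - x%:P)].

(* The eigenvalues (for real symmetric matrices they all are real, so this
   sequence exists and is unique). *)
Definition eigs (R : realType) (m : nat) (A : 'M[R]_m) : seq R :=
  epsilon (inhabits [::]) (is_spectrum A).

(* mu A k = k-th largest eigenvalue mu_k(A), 1-indexed: mu_1 >= mu_2 >= ... *)
Definition mu (R : realType) (m : nat) (A : 'M[R]_m) (k : nat) : R :=
  (eigs A)`_k.-1.

Definition Jmx (R : realType) (n : nat) : 'M[R]_n := const_mx 1.

Definition Qp (R : realType) (n : nat) (Q1 : 'M[R]_n) (p : R) : 'M[R]_(n + n) :=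
  block_mx (Q1 + (n%:R * p)%:M) (- (p *: Jmx R n))
           (- (p *: Jmx R n)) (n%:R%:M - Jmx R n - Q1 + (n%:R * p)%:M).

Definition pstar (R : realType) (n : nat) (Q1 : 'M[R]_n) : R :=
  sup ([set 0] `|` [set p : R | 0 < p /\ mu (Qp Q1 p) (n + n).-1 = 2 * n%:R * p])%classic.

(* Main.v *)
Require Import Defs.
From HB Require Import structures.
From mathcomp Require Import all_boot all_order all_algebra.
From mathcomp Require Import classical_sets reals.
From mathcomp Require Import ring lra.
From mathcomp.real_closed Require Import complex.
From Stdlib Require Import ClassicalEpsilon.
Import Order.TTheory GRing.Theory Num.Theory.
Local Open Scope ring_scope.
Set Implicit Arguments. Unset Strict Implicit. Unset Printing Implicit Defensive.

Lemma char_poly_conj (F : fieldType) k (P D : 'M[F]_k) : P \in unitmx ->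
  char_poly (invmx P *m D *m P) = char_poly D.
Proof.
move=> Pu; rewrite /char_poly /char_poly_mx.
set P' := map_mx polyC P.
have P'u : P' \in unitmx by rewrite map_unitmx.
have E : invmx P' *m 'X%:M *m P' = ('X%:M : 'M[{poly F}]_k).
  by rewrite mul_mx_scalar -scalemxAl mulVmx // scalemx1.
rewrite !map_mxM map_invmx -/P' -[X in \det (X - _)]E -mulmxBl -mulmxBr !det_mulmx.
rewrite mulrC mulrA -det_mulmx mulmxV // det1 mul1r //.
Qed.

Lemma sym_split (R : realType) k (A : 'M[R]_k) : A^T = A ->
  exists s : seq R, char_poly A = \prod_(x <- s) ('X - x%:P).
Proof.
move=> Asym.
pose f := real_complex R.
set AC := map_mx f A.
have herm : AC \is hermsymmx.
  apply: realsym_hermsym.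
    by apply/is_hermitianmxP; rewrite expr0 scale1r map_mx_id // /AC map_trmx Asym.
  by apply/'forall_forallP => i j; rewrite mxE /f complex_real.

have Heq := orthomx_spectralP (hermitian_normalmx herm).
have dreal := hermitian_spectral_diag_real herm.
set d := spectral_diag AC in Heq dreal.
exists [seq complex.Re (d 0 i) | i <- enum 'I_k].
apply: (@map_poly_inj _ _ f).
rewrite map_char_poly -/AC Heq char_poly_conj ?spectral_unit //.
rewrite char_poly_trig ?diag_mx_is_trig // rmorph_prod big_map big_enum /=.
apply: eq_bigr => i _; rewrite map_polyXsubC mxE eqxx mulr1n.
have := mxOverP dreal 0 i; case: (d 0 i) => a b; rewrite complex_real => /eqP -> //.
Qed.

Section Blk.
Variable T : comNzRingType.
Variable m : nat.

Definition Smx : 'M[T]_(1 + m) := block_mx 1 (const_mx 1) (- const_mx 1) 1.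
Definition Mof (Q : 'M[T]_(1 + m)) : 'M_m := drsubmx Q - const_mx 1 *m ursubmx Q.
Definition B1of (Q : 'M[T]_(1 + m)) : 'M_(1 + m) := block_mx 0 0 0 (Mof Q).
Definition Jd : 'M[T]_(1 + m) := block_mx (1 + m)%:R%:M 0 0 0.

Lemma constmx_mul k l p : (const_mx 1 : 'M[T]_(k, l)) *m (const_mx 1 : 'M[T]_(l, p)) = const_mx l%:R.
Proof.
apply/matrixP => i j; rewrite !mxE.
under eq_bigr do rewrite !mxE mulr1.
by rewrite sumr_const card_ord.
Qed.

Lemma S_Q Q : (const_mx 1 : 'rV_(1 + m)) *m Q = 0 -> Q *m (const_mx 1 : 'cV_(1 + m)) = 0 ->
  Smx *m Q = B1of Q *m Smx.
Proof.
rewrite -[Q]submxK /B1of /Mof /Smx.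
set a := ulsubmx Q; set b := ursubmx Q; set c := dlsubmx Q; set d := drsubmx Q.
rewrite !(block_mxKur, block_mxKdr).
rewrite -[const_mx 1 : 'rV_(1 + m)]row_mx_const -[const_mx 1 : 'cV_(1 + m)]col_mx_const.
rewrite mul_row_block mul_block_col.
rewrite -row_mx0 -col_mx0 => /eq_row_mx [h1 h2] /eq_col_mx [h3 h4].
rewrite !mulmx_block !mul0mx !mul1mx !mulmx1 !add0r ?addr0.
have c11 : (const_mx 1 : 'M[T]_1) = 1%:M by apply/matrixP => i j; rewrite !ord1 !mxE.
rewrite c11 mul1mx in h1; rewrite c11 mul1mx in h2; rewrite c11 mulmx1 in h3.
move/eqP: h3; rewrite addrC addr_eq0 => /eqP h3.
move/eqP: h4; rewrite addrC addr_eq0 => /eqP h4.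
rewrite h1 h2 mulmxN mulmxBl h4 -mulmxA h3 mulmxN opprB addrC.
rewrite c11 mulmx1 mulNmx opprK [c + _]addrC mulNmx [d - _]addrC.
done.
Qed.

Lemma S_J : Smx *m const_mx 1 = Jd *m Smx.
Proof.
rewrite /Smx /Jd -[const_mx 1 : 'M_(1 + m)]row_mx_const -!col_mx_const -block_mxEh.
rewrite !mulmx_block !mul0mx !mul1mx !mulmx1 !addr0 !mulNmx !constmx_mul.
congr block_mx.
- by apply/matrixP => i j; rewrite !mxE !ord1 eqxx mulr1n natrD.
- by rewrite mul_scalar_mx scalemx_const mulr1; apply/matrixP => i j; rewrite !mxE natrD.
- by rewrite addNr.
- by rewrite addNr.
Qed.

Lemma det_S : \det Smx = (1 + m)%:R.
Proof.
have E : Smx *m block_mx 1 0 (const_mx 1) 1 = block_mx (1 + m)%:R%:M (const_mx 1) 0 1.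
  rewrite /Smx !mulmx_block ?mul0mx ?mul1mx ?mulmx1 ?addr0 ?mulmx0 ?addr0 ?constmx_mul.
  rewrite !add0r addNr; congr block_mx.
  by apply/matrixP => i j; rewrite !mxE !ord1 eqxx mulr1n natrD.
have := congr1 determinant E.
rewrite det_mulmx det_lblock det_ublock !det1 !mulr1 => ->.
by rewrite det_mx11 mxE eqxx mulr1n.
Qed.
End Blk.

Lemma det_block_comm (T : comNzRingType) k (A B C D : 'M[T]_k) :
  C *m D = D *m C ->
  \det (block_mx A B C D) * \det D = \det (A *m D - B *m C) * \det D.
Proof.
move=> CD.
have E : block_mx A B C D *m block_mx D 0 (- C) 1%:M = block_mx (A *m D - B *m C) B 0 D.
  rewrite mulmx_block !mulmx0 !mulmx1 !add0r !mulmxN CD subrr.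
  by rewrite [A *m D - _]addrC.
have := congr1 determinant E.
by rewrite det_mulmx det_lblock det1 mulr1 det_ublock mulrC => ->.
Qed.

Lemma det_comp (T : comNzRingType) k (M : 'M[T]_k) (Y : {poly T}) :
  \det (Y%:M - map_mx polyC M) = char_poly M \Po Y.
Proof.
rewrite /char_poly -det_map_mx /=; congr determinant.
apply/matrixP => i j; rewrite !mxE.
by rewrite comp_polyB comp_polyC; case: (i == j); rewrite ?mulr1n ?mulr0n ?comp_poly0 ?comp_polyX.
Qed.

Section Intw.
Variable T : comNzRingType.
Variable k : nat.
Variable S : 'M[T]_k.
Definition intw (x x' : 'M[T]_k) := S *m x = x' *m S.
Lemma intwD x x' y y' : intw x x' -> intw y y' -> intw (x + y) (x' + y').
Proof. by rewrite /intw mulmxDr mulmxDl => -> ->. Qed.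
Lemma intwN x x' : intw x x' -> intw (- x) (- x').
Proof. by rewrite /intw mulmxN mulNmx => ->. Qed.
Lemma intwB x x' y y' : intw x x' -> intw y y' -> intw (x - y) (x' - y').
Proof. by move=> h1 h2; apply: intwD => //; apply: intwN. Qed.
Lemma intwM x x' y y' : intw x x' -> intw y y' -> intw (x *m y) (x' *m y').
Proof. by rewrite /intw => h1 h2; rewrite mulmxA h1 -mulmxA h2 mulmxA. Qed.
Lemma intwC c : intw c%:M c%:M.
Proof. by rewrite /intw scalar_mxC. Qed.
Lemma intwZ c x x' : intw x x' -> intw (c *: x) (c *: x').
Proof. by rewrite /intw -scalemxAr -scalemxAl => ->. Qed.
End Intw.

Lemma char_poly_block (T : comNzRingType) k l (A : 'M[T]_k) B C (D : 'M[T]_l) :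
  char_poly_mx (block_mx A B C D) =
  block_mx (char_poly_mx A) (- map_mx polyC B) (- map_mx polyC C) (char_poly_mx D).
Proof.
by rewrite /char_poly_mx map_block_mx scalar_mx_block opp_block_mx add_block_mx !add0r.
Qed.

Section CP.
Variable R : realType.
Variable m : nat.
Local Notation n := (1 + m)%N.
Variable Q1 : 'M[R]_n.
Hypothesis hr : (const_mx 1 : 'rV_n) *m Q1 = 0.
Hypothesis hc : Q1 *m (const_mx 1 : 'cV_n) = 0.
Local Notation M := (Mof Q1).
Local Notation P := {poly R}.
Local Notation q := (map_mx (@polyC R) Q1).
Local Notation S := (Smx P m).

Lemma hrq : (const_mx 1 : 'rV[P]_n) *m q = 0.
Proof. by rewrite -(rmorph1 (@polyC R)) -map_const_mx -map_mxM hr map_mx0. Qed.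
Lemma hcq : q *m (const_mx 1 : 'cV[P]_n) = 0.
Proof. by rewrite -(rmorph1 (@polyC R)) -map_const_mx -map_mxM hc map_mx0. Qed.
Lemma SQ : intw S q (B1of q).
Proof. exact: S_Q hrq hcq. Qed.
Lemma SJ : intw S (const_mx 1) (Jd P m).
Proof. exact: S_J. Qed.
Lemma Mofq : Mof q = map_mx polyC M.
Proof.
by rewrite /Mof map_mxB map_mxM map_drsubmx map_ursubmx map_const_mx rmorph1.
Qed.
Lemma detS_neq0 : \det S != 0.
Proof. by rewrite det_S -polyC_natr polyC_eq0 pnatr_eq0. Qed.

Lemma det_cancel (x x' : 'M[P]_n) : intw S x x' -> \det x = \det x'.
Proof.
rewrite /intw => /(congr1 determinant); rewrite !det_mulmx [\det x' * _]mulrC.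
by move/mulfI; apply; apply: detS_neq0.
Qed.

Lemma charQ1 : char_poly Q1 = 'X * char_poly M.
Proof.
have := det_cancel (intwB (intwC S 'X) SQ).
rewrite /char_poly /char_poly_mx => ->.
rewrite /B1of [X in X - _]scalar_mx_block opp_block_mx add_block_mx !oppr0 !addr0.
by rewrite det_ublock det_mx11 !mxE eqxx mulr1n Mofq.
Qed.

Lemma JQ : Jmx R n *m Q1 = 0.
Proof.
rewrite /Jmx -[const_mx 1 : 'M_n](constmx_mul R n 1 n) -mulmxA hr.
by rewrite mulmx0.
Qed.
Lemma QJ : Q1 *m Jmx R n = 0.
Proof.
rewrite /Jmx -[const_mx 1 : 'M_n](constmx_mul R n 1 n) mulmxA hc.
by rewrite mul0mx.
Qed.

Variable p : R.

Lemma charQp : char_poly (Qp Q1 p) =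
  ('X * ('X - (2 * n%:R * p)%:P)) *
  ((char_poly M \Po ('X - (n%:R * p)%:P)) *
   ((-1) ^+ m * (char_poly M \Po ((n%:R + n%:R * p)%:P - 'X)))).
Proof.
rewrite /char_poly /Qp char_poly_block !map_mxN !opprK.
set A1 := Q1 + _; set D1 := _ + (n%:R * p)%:M.
set B0 := map_mx polyC (p *: Jmx R n).
have comm : B0 *m char_poly_mx D1 = char_poly_mx D1 *m B0.
  have E : (p *: Jmx R n) *m D1 = D1 *m (p *: Jmx R n).
    rewrite /D1 -!scalemxAl -!scalemxAr; congr (_ *: _).
    rewrite !mulmxDr !mulmxDl !mulmxN !mulNmx JQ QJ.
    by rewrite !scalar_mxC.
  rewrite /char_poly_mx (mulmxBr B0) (mulmxBl 'X%:M) scalar_mxC.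
  by rewrite /B0 -!map_mxM E.
have := det_block_comm (char_poly_mx A1) B0 comm.
move/mulIf => ->; last by apply: monic_neq0; apply: char_poly_monic.
have mapJ : map_mx (@polyC R) (Jmx R n) = const_mx 1.
  by apply/matrixP => i j; rewrite !mxE.
have IA : intw S (char_poly_mx A1) ('X%:M - (B1of q + ((n%:R * p)%:P)%:M)).
  rewrite /char_poly_mx /A1 map_mxD map_scalar_mx.
  exact: intwB (intwC _ _) (intwD SQ (intwC _ _)).
have ID : intw S (char_poly_mx D1)
    ('X%:M - (((n%:R : R)%:P)%:M - Jd P m - B1of q + ((n%:R * p)%:P)%:M)).
  rewrite /char_poly_mx /D1 !(map_mxD, map_mxB, map_mxN) !map_scalar_mx mapJ.
  apply: intwB (intwC _ _) _; apply: intwD (intwC _ _) ; apply: intwB SQ.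
  exact: intwB (intwC _ _) SJ.
have IB : intw S B0 (p%:P *: Jd P m).
  by rewrite /B0 map_mxZ mapJ; exact: intwZ SJ.
rewrite (det_cancel (intwB (intwM IA ID) (intwM IB IB))).
have sc : forall a : P, (a%:M : 'M_(1 + m)) = block_mx a%:M 0 0 a%:M.
  by move=> a; apply: scalar_mx_block.
rewrite /B1of /Jd !sc !scale_block_mx !(opp_block_mx, add_block_mx).
rewrite !mulmx_block !(oppr0, scaler0, mulmx0, mul0mx, addr0, add0r, subr0, sub0r).
rewrite opp_block_mx add_block_mx !(oppr0, addr0) det_ublock det_mulmx.
rewrite Mofq.
set c := (n%:R * p)%:P.
have e1 : 'X%:M - (map_mx polyC M + c%:M) = ('X - c)%:M - map_mx polyC M.
  apply/matrixP => i j; rewrite !mxE; case: (i == j); rewrite ?mulr1n ?mulr0n; ring.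
have e2 : 'X%:M - ((n%:R : R)%:P%:M - map_mx polyC M + c%:M) =
    - (((n%:R : R)%:P + c - 'X)%:M - map_mx polyC M).
  apply/matrixP => i j; rewrite !mxE; case: (i == j); rewrite ?mulr1n ?mulr0n; ring.
rewrite e1 e2 -[- (_ - map_mx polyC M)]scaleN1r detZ !det_comp.
congr (_ * _).
- rewrite det_mx11 !mxE big_ord1 !mxE !eqxx !mulr1n big_ord1 !mxE.
  rewrite /c !polyCM !polyC_natr (_ : (0 == ord0 :> 'I_1) = true) // !mulr1n; ring.
by rewrite !comp_polyXr polyCD.
Qed.
End CP.

Section Lap.
Variable R : realType.
Variable n : nat.
Variable e : rel 'I_n.
Hypothesis esym : symmetric e.
Hypothesis eirr : irreflexive e.
Local Notation L := (laplacian R e).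
Definition ew (i j : 'I_n) : R := (e i j)%:R.
Definition deg (i : 'I_n) : R := \sum_k ew i k.

Lemma ew_sym i j : ew i j = ew j i.
Proof. by rewrite /ew esym. Qed.

Lemma card_deg i : (#|[set k | e i k]|)%:R = deg i.
Proof.
rewrite -sum1_card natr_sum /deg big_mkcond /=; apply: eq_bigr => k _.
by rewrite inE /ew; case: (e i k).
Qed.

Lemma lapE i j : L i j = (if i == j then deg i else 0) - ew i j.
Proof.
rewrite mxE card_deg /ew; case: eqP => [<-|_]; last by rewrite sub0r.
by rewrite eirr subr0.
Qed.

Lemma lap_sym : L^T = L.
Proof.
apply/matrixP => i j; rewrite mxE !lapE ew_sym eq_sym.
by case: eqP => // ->.
Qed.

Lemma lap_col : L *m (const_mx 1 : 'cV_n) = 0.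
Proof.
apply/matrixP => i j; rewrite !mxE.
under eq_bigr do rewrite [X in _ * X]mxE mulr1 lapE.
rewrite sumrB (bigD1 i) //= eqxx big1 ?addr0 ?subrr // => k /negbTE.
by rewrite eq_sym => ->.
Qed.

Lemma lap_row : (const_mx 1 : 'rV_n) *m L = 0.
Proof.
by rewrite -[L]lap_sym -trmx_const -trmx_mul lap_col trmx0.
Qed.

Lemma lap_eig_bounds x : eigenvalue L x -> 0 <= x <= n%:R.
Proof.
move=> /eigenvalueP [v vL vn0].
pose w i := v 0 i.
have quad : \sum_j \sum_i w i * L i j * w j = x * \sum_j w j ^+ 2.
  rewrite mulr_sumr; apply: eq_bigr => j _.
  have hj : \sum_i w i * L i j = x * w j.
    by have := congr1 (fun M : 'rV[R]_n => M 0 j) vL; rewrite !mxE.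
  by rewrite -mulr_suml hj expr2 mulrA.
have q1 : forall j, \sum_i w i * L i j * w j = \sum_i ew i j * (w j ^+ 2 - w i * w j).
  move=> j; under eq_bigr do rewrite lapE.
  transitivity (\sum_i ((if i == j then deg i else 0) * w i * w j) - \sum_i ew i j * w i * w j).
    by rewrite -sumrB; apply: eq_bigr => i _; set dd := (if _ then _ else _); ring.
  rewrite (bigD1 j) //= eqxx big1 ?addr0; last by move=> i /negbTE ->; rewrite !mul0r.
  rewrite /deg !mulr_suml -sumrB; apply: eq_bigr => i _; rewrite [ew j i]ew_sym; ring.
have sw : \sum_j \sum_i ew i j * (w j ^+ 2 - w i * w j) =
          \sum_j \sum_i ew i j * (w i ^+ 2 - w i * w j).
  rewrite exchange_big /=; apply: eq_bigr => j _; apply: eq_bigr => i _.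
  rewrite [ew j i]ew_sym; ring.
have two : 2 * (\sum_j \sum_i w i * L i j * w j) =
    \sum_j \sum_i ew i j * (w i - w j) ^+ 2.
  rewrite (eq_bigr _ (fun j _ => q1 j)) mulr_natl mulr2n {2}sw -big_split /=.
  apply: eq_bigr => j _; rewrite -big_split /=; apply: eq_bigr => i _; ring.
have pos : 0 < \sum_j w j ^+ 2.
  case: (pickP (fun i => w i != 0)) => [i wi | all0]; last first.
    case/eqP: vn0; apply/matrixP => a b; rewrite ord1 mxE.
    by have := all0 b; rewrite /w => /negbFE/eqP.
  rewrite (bigD1 i) //=.
  have h2 : 0 <= \sum_(j | j != i) w j ^+ 2 by apply: sumr_ge0 => j _; exact: sqr_ge0.
  have h3 : 0 < w i ^+ 2 by rewrite lt0r sqrf_eq0 wi sqr_ge0.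
  lra.
have lo : 0 <= \sum_j \sum_i ew i j * (w i - w j) ^+ 2.
  apply: sumr_ge0 => j _; apply: sumr_ge0 => i _.
  by apply: mulr_ge0; rewrite ?sqr_ge0 // /ew ler0n.
have hi : \sum_j \sum_i ew i j * (w i - w j) ^+ 2 <= 2 * n%:R * \sum_j w j ^+ 2.
  apply: (le_trans (y := \sum_j \sum_i (w i - w j) ^+ 2)).
    apply: ler_sum => j _; apply: ler_sum => i _.
    by rewrite /ew; case: (e i j); rewrite ?mul1r ?mul0r ?sqr_ge0.
  set W := \sum_i w i; set S2 := \sum_j w j ^+ 2.
  have inner : forall j, \sum_i (w i - w j) ^+ 2 = S2 - 2 * w j * W + n%:R * w j ^+ 2.
    move=> j.
    transitivity (\sum_i (w i ^+ 2 - 2 * w j * w i + w j ^+ 2)).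
      by apply: eq_bigr => i _; ring.
    by rewrite big_split sumrB /= -mulr_sumr sumr_const card_ord -/S2 -/W !mulr_natl.
  rewrite (eq_bigr _ (fun j _ => inner j)) big_split sumrB /= -mulr_suml -mulr_sumr.
  rewrite sumr_const card_ord -/S2 -/W.
  rewrite -mulr_sumr -/S2 -mulr_natl; have := sqr_ge0 W; rewrite expr2; nra.
rewrite quad in two.
set S2 := \sum_j w j ^+ 2 in two pos hi.
set T2 := \sum_j \sum_i _ in two lo hi.
apply/andP; split; nra.
Qed.
End Lap.

Lemma eigs_spec (R : realType) k (A : 'M[R]_k) : A^T = A -> is_spectrum A (eigs A).
Proof.
move=> /sym_split [s hs]; rewrite /eigs; apply: epsilon_spec.
exists (sort (fun x y => y <= x) s); split.
- have := congr1 (fun p : {poly R} => size p) hs; rewrite size_char_poly size_prod_XsubC => -[->].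
  by rewrite size_sort.
- by apply: sort_sorted => x y; exact: le_total.
- by rewrite hs; apply: perm_big; rewrite perm_sym perm_sort.
Qed.

Lemma comp_shift (R : realType) (s : seq R) c :
  (\prod_(x <- s) ('X - x%:P)) \Po ('X - c%:P) = \prod_(x <- s) ('X - (x + c)%:P).
Proof.
elim: s => [|x s IH]; first by rewrite !big_nil rmorph1.
rewrite !big_cons comp_polyM IH comp_polyB comp_polyX comp_polyC polyCD.
by congr (_ * _); ring.
Qed.

Lemma comp_refl (R : realType) (s : seq R) d :
  (-1) ^+ size s * ((\prod_(x <- s) ('X - x%:P)) \Po (d%:P - 'X)) =
  \prod_(x <- s) ('X - (d - x)%:P).
Proof.
elim: s => [|x s IH]; first by rewrite !big_nil rmorph1 mulr1.
rewrite !big_cons comp_polyM /= exprS -IH comp_polyB comp_polyX comp_polyC polyCB.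
ring.
Qed.

Section Lists.
Variable R : realType.
Local Notation ge := (fun x y : R => y <= x).

Lemma sorted_last_min (s : seq R) x : sorted ge (rcons s x) -> all (fun y => x <= y) s.
Proof.
rewrite -rev_sorted rev_rcons /= => h.
have := order_path_min (le_trans : transitive (fun a b : R => a <= b)) h.
by rewrite all_rev.
Qed.

Lemma ge_trans : transitive ge.
Proof. by move=> y x z h1 h2; exact: le_trans h2 h1. Qed.

Lemma head_max (x : R) s : sorted ge (x :: s) -> all (fun y => y <= x) s.
Proof. by move=> h; exact: order_path_min ge_trans h. Qed.

Lemma Kmin (t r : seq R) z : sorted ge t -> perm_eq t (z :: r) ->
  all (fun x => z <= x) r -> r != [::] ->
  t`_(size t).-2 \in r /\ all (fun x => t`_(size t).-2 <= x) r.
Proof.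
move=> st pt zr rn0.
have sz : size t = (size r).+1 by rewrite (perm_size pt).
case/lastP: t st pt sz => [|t' w] st pt sz; first by [].
have wmin := sorted_last_min st.
have wz : w = z.
  have zin : z \in rcons t' w by rewrite (perm_mem pt) mem_head.
  have win : w \in z :: r by rewrite -(perm_mem pt) mem_rcons mem_head.
  apply/le_anti/andP; split.
  - rewrite mem_rcons in_cons in zin; case/orP: zin => [/eqP -> //|zt'].
    exact: (allP wmin).
  - rewrite in_cons in win; case/orP: win => [/eqP -> //|wr].
    exact: (allP zr).
subst w.
have pt' : perm_eq t' r by rewrite perm_rcons perm_cons in pt.
have st' : sorted ge t' by apply: (subseq_sorted ge_trans (subseq_rcons t' z)).
clear wmin pt.
case/lastP: t' st' pt' sz st => [|t'' v] st' pt' sz st.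
  by move/perm_size: pt'; case: r rn0 {zr sz}.
have -> : (rcons (rcons t'' v) z)`_(size (rcons (rcons t'' v) z)).-2 = v.
  by rewrite !size_rcons /= !nth_rcons size_rcons ltnS leqnn ltnn eqxx.
split; first by rewrite -(perm_mem pt') mem_rcons mem_head.
rewrite -(perm_all _ pt') all_rcons lexx /=.
exact: sorted_last_min st'.
Qed.


Lemma Ksec (t r : seq R) z a : sorted ge t -> perm_eq t (z :: a :: r) ->
  z <= a -> all (fun x => z <= x) r ->
  (t`_(size t).-2 = a <-> all (fun x => a <= x) r).
Proof.
move=> st pt za zr.
have [vin vmin] := Kmin st pt (introT andP (conj za zr)) isT.
split.
  by move=> va; rewrite va /= in vmin; case/andP: vmin.
move=> ar; apply/le_anti/andP; split; first by case/andP: vmin.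
rewrite in_cons in vin; case/orP: vin => [/eqP -> //|vr].
exact: (allP ar).
Qed.
End Lists.

Lemma sup_eq_max (R : realType) (E : set R) x : E x -> ubound E x -> sup E = x.
Proof.
move=> Ex ub; apply/le_anti/andP; split.
  by apply: ge_sup => //; exists x.
by apply: (ub_le_sup (ex_intro _ x ub)).
Qed.

Unset Implicit Arguments.

Theorem mainTheorem6 (R : realType) (n : nat) (e : rel 'I_n) :
  (2 <= n)%N -> simple_graph e ->
  pstar (laplacian R e) =
    Num.min (mu (laplacian R e) n.-1 / n%:R) (1 - mu (laplacian R e) 1 / n%:R).
Proof.
case: n e => [|m] e // hn [esym eirr].
set L := laplacian R e.
have Lsym : L^T = L := lap_sym R esym eirr.
have hr : (const_mx 1 : 'rV_(1 + m)) *m L = 0 := lap_row R esym eirr.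
have hc : L *m (const_mx 1 : 'cV_(1 + m)) = 0 := lap_col R eirr.
have cQ := charQ1 hr hc.
have [szL sortL prodL] := eigs_spec Lsym.
set t1 := eigs L in szL sortL prodL.
have root0 : 0 \in t1.
  by rewrite -root_prod_XsubC -prodL cQ rootM rootX eqxx.
set s := rem 0 t1.
have pt1 : perm_eq t1 (0 :: s) := perm_to_rem root0.
have cMs : char_poly (Mof L) = \prod_(x <- s) ('X - x%:P).
  apply: (@mulfI _ ('X - 0%:P)); first by rewrite polyXsubC_eq0.
  by rewrite polyC0 subr0 -cQ prodL (perm_big _ pt1) big_cons polyC0 subr0.
have szs : size s = m by have := perm_size pt1; rewrite szL => -[].
have sn0 : s != [::] by apply/eqP => s0; move: szs hn; rewrite s0 => <-.
have sbound : all (fun x => 0 <= x <= m.+1%:R) s.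
  apply/allP => x xs; apply: (lap_eig_bounds esym eirr).
  by rewrite eigenvalue_root_char prodL root_prod_XsubC (perm_mem pt1) in_cons xs orbT.
have s0 : all (fun x => 0 <= x) s.
  by apply/allP => x /(allP sbound) /andP [].
have [l2in l2min] := Kmin sortL pt1 s0 sn0.
set lam2 := t1`_(size t1).-2 in l2in l2min.
set lmax := t1`_0.
have lmax_ge : forall y, y \in t1 -> y <= lmax.
  rewrite /lmax; case E: t1 sortL => [|x0 rest] sortL' //= y.
  rewrite in_cons => /orP [/eqP -> //|yr].
  exact: (allP (head_max sortL')).
have lmax_in : lmax \in t1 by rewrite /lmax mem_nth // szL.
have lam2_0 : 0 <= lam2 by have := allP s0 _ l2in.
have lmax_n : lmax <= m.+1%:R.
  move: lmax_in; rewrite (perm_mem pt1) in_cons => /orP [/eqP -> //|].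
  by move=> /(allP sbound) /andP [].
have lmax_ge_s : forall y, y \in s -> y <= lmax.
  by move=> y ys; apply: lmax_ge; rewrite (perm_mem pt1) in_cons ys orbT.
have keyp : forall p, 0 < p ->
  (mu (Qp L p) (m.+1 + m.+1).-1 = 2 * m.+1%:R * p <->
   m.+1%:R * p <= lam2 /\ lmax <= m.+1%:R - m.+1%:R * p).
  move=> p p0.
  have Qsym : (Qp L p)^T = Qp L p.
    rewrite /Qp tr_block_mx !linearD /= !linearN /= !linearZ /= ?linearB /=.
    by rewrite !tr_scalar_mx /Jmx trmx_const Lsym.
  have [szp sortp prodp] := eigs_spec Qsym.
  have cp := charQp hr hc p.
  rewrite cMs comp_shift -[X in (-1) ^+ X]szs comp_refl in cp.
  change (1 + m)%N with m.+1 in cp.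
  set np := m.+1%:R * p.
  set r := [seq x + np | x <- s] ++ [seq m.+1%:R + np - x | x <- s].
  have pp : perm_eq (eigs (Qp L p)) (0 :: 2 * np :: r).
    apply: prod_XsubC_eq; rewrite -prodp cp /r !big_cons big_cat !big_map /=.
    by rewrite polyC0 subr0 /np !mulrA.
  have np0 : 0 < np by rewrite /np mulr_gt0 // ltr0n.
  have r0 : all (fun x => 0 <= x) r.
    rewrite all_cat !all_map; apply/andP; split; apply/allP => x xs /=;
      have /andP [x0 xn] := allP sbound x xs; lra.
  rewrite /mu (_ : (m.+1 + m.+1).-1.-1 = (size (eigs (Qp L p))).-2); last by rewrite szp.
  rewrite (_ : 2 * m.+1%:R * p = 2 * np); last by rewrite /np mulrA.
  rewrite (Ksec sortp pp _ r0); last lra.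
  rewrite all_cat !all_map; split.
  - case/andP => /allP h1 /allP h2; split.
      by have := h1 _ l2in; rewrite /= => ?; lra.
    move: lmax_in; rewrite (perm_mem pt1) in_cons => /orP [/eqP ->|lms].
      by have := h2 _ l2in; rewrite /= => ?; lra.
    by have := h2 _ lms; rewrite /= => ?; lra.
  - case=> h1 h2; apply/andP; split; apply/allP => x xs /=.
      by have := allP l2min x xs; rewrite /= => ?; lra.
    by have := lmax_ge_s x xs; lra.
have -> : mu L m.+1.-1 = lam2 by rewrite /mu /lam2 szL.
have -> : mu L 1 = lmax by [].
set k := m.+1%:R.
have k0 : 0 < k by rewrite /k ltr0n.
have e1 : 1 - lmax / k = (k - lmax) / k.
  by field; rewrite -mulrS pnatr_eq0.
rewrite e1.
set ms := Num.min (lam2 / k) ((k - lmax) / k).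
have ms0 : 0 <= ms.
  by rewrite le_min !divr_ge0 ?(ltW k0) // subr_ge0.
have hms1 : ms * k <= lam2 by rewrite -ler_pdivlMr // ge_min lexx.
have hms2 : ms * k <= k - lmax by rewrite -ler_pdivlMr // ge_min lexx orbT.
rewrite /pstar; apply: sup_eq_max.
  have [ms_pos|] := ltP 0 ms; last by move=> h; left; apply/le_anti; rewrite h ms0.
  right; split => //; apply/keyp => //; split; rewrite [k * ms]mulrC; lra.
move=> a [-> //|[a0 /(keyp _ a0) [h1 h2]]].
rewrite le_min !ler_pdivlMr // !(mulrC a); apply/andP; split => //; lra.
Qed.
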